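(* Let $0<\alpha<\beta<1$, let $\theta_1\in[0,1)$ and let $F_1\subset V(\theta_1)$ be a linear subspace with $\dim F_1=k$. For every $\varepsilon>0$ there exists $\delta>0$ such that for every $\theta_2\in[0,1)$ with $|\theta_2-\theta_1|\le\delta$ there exists a linear subspace $F_2\subset V(\theta_2)$ with $\dim F_2=k$ and $\max\{\mathrm{dist}(F_1,F_2),\mathrm{dist}(F_2,F_1)\}<\varepsilon$.
   Context: $Q=(0,1)$, $Q_1=(0,\alpha)\cup(\beta,1)$. Let $p$ be a $1$-periodic measurable function with $p>0$, $p,p^{-1}\in L^\infty(0,1)$. For $\theta\in[0,1)$, $H^1_\theta(Q)=\{u\in H^1(0,1):u(1)=e^{2\pi i\theta}u(0)\}$ and $V(\theta)=\{v\in H^1_\theta(Q):p v'=0\text{ a.e. on }Q_1\}$. For linear subspaces $N,M$ of $H^1(0,1)$, $\mathrm{dist}(N,M):=\sup_{u\in N,\ \|u\|_{H^1}=1}\ \inf_{v\in M}\|u-v\|_{H^1}$. *)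

(* Defs.v *)
From HB Require Import structures.
From mathcomp Require Import all_boot all_order all_algebra.
From mathcomp Require Import all_classical all_reals all_analysis.
From mathcomp Require complex.
Import complex.ComplexField.
Set Implicit Arguments. Unset Strict Implicit. Unset Printing Implicit Defensive.
Import Order.TTheory GRing.Theory Num.Theory.
Import numFieldNormedType.Exports.
Local Open Scope classical_set_scope.
Local Open Scope ring_scope.

Section Defs.
Variable R : realType.

Notation C := (complex.complex R).
Notation mu := (@lebesgue_measure R).
Definition I01 : set R := `[0, 1].

Definition ReF (f : R -> C) : R -> R := fun x => complex.Re (f x).
Definition ImF (f : R -> C) : R -> R := fun x => complex.Im (f x).

Definition L2r (f : R -> R) : Prop :=
  measurable_fun I01 f /\
  mu.-integrable I01 (fun x => ((f x) ^+ 2)%:E).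

Definition L2c (g : R -> C) : Prop := L2r (ReF g) /\ L2r (ImF g).

(* g is (a representative of) the weak derivative of u and u is in H^1(0,1),
   u being identified with its continuous representative on [0,1]:
   u(x) = u(0) + \int_0^x g  for x in [0,1], with g in L^2(0,1). *)
Definition H1_deriv (u g : R -> C) : Prop :=
  L2c g /\
  forall x, x \in `[0, 1] ->
    ReF u x = ReF u 0 + Rintegral mu (`[0, x] : set R) (ReF g) /\
    ImF u x = ImF u 0 + Rintegral mu (`[0, x] : set R) (ImF g).

Definition H1 (u : R -> C) : Prop := exists g, H1_deriv u g.

(* The H^1(0,1) norm: (\int_0^1 |u|^2 + |u'|^2)^{1/2}; the weak derivative is
   unique a.e., so the set below is a singleton for u in H^1. *)
Definition H1norm (u : R -> C) : R :=
  sup [set r | exists g, H1_deriv u g /\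
     r = Num.sqrt (Rintegral mu I01
           (fun x => ReF u x ^+ 2 + ImF u x ^+ 2 + ReF g x ^+ 2 + ImF g x ^+ 2))].

Definition expi2pi (t : R) : C :=
  complex.Complex (cos (2 * pi * t)) (sin (2 * pi * t)).

Definition H1theta (t : R) (u : R -> C) : Prop := H1 u /\ u 1 = expi2pi t * u 0.

Definition Q1 (a b : R) : set R := (`]0, a[ : set R) `|` (`]b, 1[ : set R).

Definition Vth (p : R -> R) (a b t : R) (v : R -> C) : Prop :=
  H1theta t v /\
  exists g, H1_deriv v g /\
    {ae mu, forall x, Q1 a b x -> complex.Complex (p x) 0 * g x = 0}.

Definition span_on (k : nat) (b : 'I_k -> R -> C) : set (R -> C) :=
  [set u | exists c : 'I_k -> C, forall x, x \in `[0, 1] ->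
             u x = \sum_(i < k) c i * b i x].

Definition lin_indep_on (k : nat) (b : 'I_k -> R -> C) : Prop :=
  forall c : 'I_k -> C,
    (forall x, x \in `[0, 1] -> \sum_(i < k) c i * b i x = 0) ->
    forall i, c i = 0.

Definition subspace_dim (F : set (R -> C)) (k : nat) : Prop :=
  exists b : 'I_k -> R -> C, lin_indep_on b /\ F = span_on b.

Definition dist (N M : set (R -> C)) : R :=
  sup [set d | exists u, N u /\ H1norm u = 1 /\
         d = inf [set e | exists v, M v /\ e = H1norm (u - v)]].

Definition coeff_ok (p : R -> R) : Prop :=
  measurable_fun setT p /\
  (forall x, p (x + 1) = p x) /\
  (forall x, 0 < p x) /\
  (exists M : R, {ae mu, forall x, x \in `]0, 1[ -> `|p x| <= M}) /\
  (exists M : R, {ae mu, forall x, x \in `]0, 1[ -> `|(p x)^-1| <= M}).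

End Defs.

(* Main.v *)
Require Import Defs.
From HB Require Import structures.
From mathcomp Require Import all_boot all_order all_algebra.
From mathcomp Require Import all_classical all_reals all_analysis.
From mathcomp Require complex.
From mathcomp Require Import ring lra measurable_realfun.
Import complex.ComplexField.
Import Order.TTheory GRing.Theory Num.Theory.
Import numFieldNormedType.Exports.
Local Open Scope classical_set_scope.
Local Open Scope ring_scope.
Section Dev.
Variable R : realType.
Notation C := (complex.complex R).
Notation mu := (@lebesgue_measure R).
Notation T := (measurableTypeR R).

Lemma mI01 : measurable (@I01 R : set T).
Proof. exact: measurable_itv. Qed.

Lemma mconv (D : set R) (f : R -> R) :
  measurable_fun (D : set R) f -> measurable_fun (D : set T) f.
Proof. by []. Qed.

Lemma mconv' (D : set R) (f : R -> R) :
  measurable_fun (D : set T) f -> measurable_fun (D : set R) f.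
Proof. by []. Qed.

Lemma muI01 : mu (@I01 R) = 1%E.
Proof. by rewrite /I01 lebesgue_measure_itv/= lte_fin ltr01 -EFinD subr0. Qed.

Lemma integrable_cstI (c : R) : mu.-integrable (@I01 R) (EFin \o cst c).
Proof.
apply: (@measurable_bounded_integrable _ _ _ mu).
- exact: mI01.
- by have := ltry (1:R); rewrite -muI01.
- exact: measurable_cst.
- exists `|c|; split => // M hM x _ /=; exact: ltW.
Qed.

Lemma absle1sq (a : R) : `|a| <= 1 + a ^+ 2.
Proof.
have n0 := normr_ge0 a; rewrite -real_normK ?num_real //.
set n := `|a| in n0 *; nra.
Qed.

Lemma L2r_int {f} : L2r f -> mu.-integrable (@I01 R) (EFin \o f).
Proof.
move=> [mf intf].
apply: (@le_integrable _ _ _ mu _ mI01 _ (fun x => (1 + f x ^+ 2)%:E)).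
- by apply/measurable_EFinP; exact: mf.
- move=> x _ /=; rewrite !lee_fin (le_trans (absle1sq _))//.
  by rewrite ger0_norm // addr_ge0 // sqr_ge0.
- apply: (eq_integrable mI01 _ _ _ (integrableD mI01 (integrable_cstI 1) intf)).
  by move=> x _ /=; rewrite EFinD.
Qed.

Lemma L2r_mf {f : R -> R} : L2r f -> measurable_fun (@I01 R : set T) f.
Proof. by case. Qed.

Lemma L2r_bdd (f : R -> R) (M : R) : measurable_fun (@I01 R) f ->
  (forall x, @I01 R x -> `|f x| <= M) -> L2r f.
Proof.
move=> mf fM; split => //.
apply: (@measurable_bounded_integrable _ _ _ mu (fun x => f x ^+ 2)).
- exact: mI01.
- by have := ltry (1:R); rewrite -muI01.
- exact: measurable_funX.
- exists (M ^+ 2); split; first exact: num_real.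
  move=> N hN x Ix /=; apply: le_trans (ltW hN).
  rewrite ger0_norm ?sqr_ge0 //.
  have := fM x Ix; have := normr_ge0 (f x); rewrite -(real_normK (num_real (f x))).
  set n := `|f x|; nra.
Qed.

Lemma L2r_add (f g : R -> R) : L2r f -> L2r g -> L2r (fun x => f x + g x).
Proof.
move=> [mf If] [mg Ig]; split; first exact: measurable_funD.
apply: (@le_integrable _ _ _ mu _ mI01 _ (fun x : T => (2 * f x ^+ 2 + 2 * g x ^+ 2)%:E)).
- apply/measurable_EFinP; apply: measurable_funX; exact: measurable_funD.
- move=> x _ /=; rewrite !lee_fin !ger0_norm ?sqr_ge0 //; last first.
    by rewrite addr_ge0 // mulr_ge0 // sqr_ge0.
  set a := f x; set b := g x; have := sqr_ge0 (a - b); nra.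
- have h := integrableD mI01 (integrableZl mI01 (2:R) If) (integrableZl mI01 (2:R) Ig).
  apply: (eq_integrable mI01 _ _ _ h).
  by move=> x _ /=; rewrite EFinD !EFinM.
Qed.

Lemma L2r_scale (c : R) {f : R -> R} : L2r f -> L2r (fun x => c * f x).
Proof.
move=> [mf If]; split.
  by apply: measurable_funM => //; exact: measurable_cst.
have h := integrableZl mI01 (c ^+ 2) If.
apply: (eq_integrable mI01 _ _ _ h).
by move=> x _ /=; rewrite -EFinM exprMn.
Qed.

Lemma L2r_ext (f g : R -> R) : {in @I01 R, f =1 g} -> L2r f -> L2r g.
Proof.
move=> fg [mf If]; split.
  by apply: eq_measurable_fun mf.
apply: (eq_integrable mI01 _ _ _ If).
by move=> x xI /=; rewrite fg.
Qed.

Lemma L2r_sq {f : R -> R} : L2r f -> mu.-integrable (@I01 R) (EFin \o (fun x => f x ^+ 2)).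
Proof. by case. Qed.



Lemma Rint_sub_le (A B : set T) (h : R -> R) : measurable A -> measurable B ->
  A `<=` B -> mu.-integrable B (EFin \o h) -> (forall x, B x -> 0 <= h x) ->
  Rintegral mu A h <= Rintegral mu B h.
Proof.
move=> mA mB AB iB h0.
have iA : mu.-integrable A (EFin \o h) by exact: integrableS iB.
rewrite /Rintegral fine_le //; [exact: integrable_fin_num|exact: integrable_fin_num|].
apply: ge0_subset_integral => //; try exact: (measurable_int mu iB).
all: try by move=> x Bx; rewrite lee_fin h0.
Qed.

Lemma I01P x : @I01 R x <-> 0 <= x <= 1.
Proof. by rewrite /I01 /= in_itv. Qed.

Lemma sub0x x : x <= 1 -> (`[0, x] : set R) `<=` @I01 R.
Proof.
move=> x1 y /=; rewrite /I01 /= !in_itv /= => /andP[-> yx] /=.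
exact: le_trans yx x1.
Qed.

Lemma int_sub {g : R -> R} {x} : L2r g -> x <= 1 ->
  mu.-integrable (`[0, x] : set T) (EFin \o g).
Proof.
move=> hg x1; apply: (integrableS _ _ _ (L2r_int hg)).
- exact: mI01.
- exact: measurable_itv.
- exact: sub0x.
Qed.

Lemma L1bound {g : R -> R} {x} : L2r g -> x <= 1 ->
  `|Rintegral mu (`[0, x] : set R) g| <= Rintegral mu (@I01 R) (fun t => `|g t|).
Proof.
move=> hg x1.
apply: le_trans (le_normr_Rintegral _ _) _.
- exact: measurable_itv.
- exact: int_sub.
apply: Rint_sub_le.
- exact: measurable_itv.
- exact: mI01.
- exact: sub0x.
- exact: integrable_norm (L2r_int hg).
- by move=> t _; exact: normr_ge0.
Qed.

Lemma prim_L2 {f g : R -> R} : L2r g ->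
  (forall x, x \in `[0, 1] -> f x = f 0 + Rintegral mu (`[0, x] : set R) g) ->
  L2r f.
Proof.
move=> hg hf.
have cont := parameterized_integral_continuous ler01 (L2r_int hg).
have mP : measurable_fun (`[0, 1] : set R) (fun x => parameterized_integral mu 0 x g).
  exact: subspace_continuous_measurable_fun.
apply: (@L2r_bdd f (`|f 0| + Rintegral mu (@I01 R) (fun t => `|g t|))).
- have m2 : measurable_fun (`[0, 1] : set R) (fun x => f 0 + parameterized_integral mu 0 x g).
    apply: measurable_funD => //; exact: measurable_cst.
  rewrite /I01; apply: (eq_measurable_fun _ _ m2).
  by move=> x xI; rewrite [RHS]hf //; move: xI; rewrite inE.
- move=> x /I01P /andP[x0 x1]; rewrite hf ?in_itv /= ?x0 ?x1 //.
  apply: le_trans (ler_normD _ _) _; rewrite lerD2l.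
  exact: L1bound.
Qed.

Lemma uniq0 {d : R -> R} : L2r d ->
  (forall x, x \in `[0, 1] -> Rintegral mu (`[0, x] : set R) d = 0) ->
  {ae mu, forall x, @I01 R x -> d x = 0}.
Proof.
move=> hd h0.
set f := d \_ (@I01 R).
have intT : mu.-integrable setT (EFin \o f).
  rewrite /f -restrict_EFin; apply/(integrable_restrict mu mI01 (@measurableT _ T) _).1.
  by rewrite setTI; exact: L2r_int.
have h1 : forall y, mu.-integrable [set` Interval (BLeft (-1)) (BRight y)] (EFin \o f).
  move=> y; apply: (integrableS _ _ _ intT) => //; exact: measurable_itv.
have h2 : locally_integrable [set: R] f.
  exact: (integrable_locally mI01 (L2r_int hd)).
have := FTC1 h1 h2.
have F0 : (fun x => \int[mu]_(t in [set` Interval (BLeft (-1)) (BRight x)]) f t) = cst 0.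
  apply/funext => y /=.
  rewrite -Rintegral_mkcondr.
  have [y0|y0] := ltrP y 0.
    rewrite (_ : _ `&` _ = set0) ?Rintegral_set0 //.
    apply/seteqP; split => t //= [] /=; rewrite /I01 /= !in_itv /= => /andP[_ ty] /andP[t0 _].
    by have := le_lt_trans (le_trans t0 ty) y0; rewrite ltxx.
  rewrite (_ : _ `&` _ = `[0, Order.min y 1]%classic).
    apply: h0; rewrite in_itv /= le_min y0 ler01 /= ge_min lexx orbT //.
  apply/seteqP; split => t /=; rewrite /I01 /= !in_itv /= ?le_min.
    by move=> [/andP[_ ->] /andP[-> ->]].
  move=> /andP[t0 /andP[-> ->]]; rewrite t0 andbT; split => //.
  by apply: le_trans t0; rewrite lerN10.
apply: filterS; first exact: (ae_filter_ringOfSetsType mu).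
move=> x hx Ix.
move: hx; case/I01P/andP: (Ix) => x0 _ hx.
have hxx : (-1 < x)%R by apply: lt_le_trans x0; rewrite ltrN10.
have [_ +] := hx ltac:(by rewrite /= lte_fin).
by rewrite F0 derive1_cst /f patchE mem_set // => <-.
Qed.

Definition R1 (f g : R -> R) := L2r g /\
  forall x, x \in `[0, 1] -> f x = f 0 + Rintegral mu (`[0, x] : set R) g.

Lemma R1_uniq {f g1 g2 : R -> R} : R1 f g1 -> R1 f g2 ->
  {ae mu, forall x, @I01 R x -> g1 x = g2 x}.
Proof.
move=> [hg1 e1] [hg2 e2].
have hd : L2r (fun x => g1 x + (-1) * g2 x) by apply: L2r_add => //; exact: L2r_scale.
have := uniq0 hd.
have H : forall x, x \in `[0, 1] ->
    Rintegral mu (`[0, x] : set R) (fun x => g1 x + (-1) * g2 x) = 0.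
  move=> x; rewrite in_itv /= => /andP[x0 x1].
  rewrite RintegralD; first last.
  - exact: (int_sub (L2r_scale (-1) hg2) x1).
  - exact: int_sub.
  - exact: measurable_itv.
  rewrite RintegralZl; first last.
  - exact: int_sub.
  - exact: measurable_itv.
  have := e1 x; have := e2 x; rewrite in_itv /= x0 x1 => /(_ isT) a /(_ isT) b.
  lra.
move=> /(_ H); apply: filterS; first exact: (ae_filter_ringOfSetsType mu).
move=> x hx Ix; have := hx Ix; lra.
Qed.

Definition nsq (z : C) := complex.Re z ^+ 2 + complex.Im z ^+ 2.

Definition Qf (u g : R -> C) := Rintegral mu (@I01 R)
  (fun x => ReF u x ^+ 2 + ImF u x ^+ 2 + ReF g x ^+ 2 + ImF g x ^+ 2).

Lemma H1d_split {u g : R -> C} : H1_deriv u g -> R1 (ReF u) (ReF g) /\ R1 (ImF u) (ImF g).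
Proof.
move=> [[hr hi] e]; split; split => // x xI; have [a b] := e x xI; by [].
Qed.

Lemma H1d_join {u g : R -> C} : R1 (ReF u) (ReF g) -> R1 (ImF u) (ImF g) -> H1_deriv u g.
Proof.
move=> [hr er] [hi ei]; split; first by split.
by move=> x xI; split; [exact: er|exact: ei].
Qed.

Lemma R1_L2 {f g : R -> R} : R1 f g -> L2r f.
Proof. by move=> [hg e]; exact: (prim_L2 hg e). Qed.

Lemma add_int {f1 f2 : R -> R} : mu.-integrable (@I01 R) (EFin \o f1) ->
  mu.-integrable (@I01 R) (EFin \o f2) ->
  mu.-integrable (@I01 R) (EFin \o (fun x => f1 x + f2 x)).
Proof.
move=> i1 i2; apply: (eq_integrable mI01 _ _ _ (integrableD mI01 i1 i2)).
by move=> x _ /=; rewrite EFinD.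
Qed.

Lemma Q_int {u g : R -> C} : H1_deriv u g -> mu.-integrable (@I01 R)
  (EFin \o (fun x => ReF u x ^+ 2 + ImF u x ^+ 2 + ReF g x ^+ 2 + ImF g x ^+ 2)).
Proof.
move=> /H1d_split [r i].
apply: add_int; [apply: add_int; [apply: add_int|]|].
- exact: L2r_sq (R1_L2 r).
- exact: L2r_sq (R1_L2 i).
- exact: L2r_sq r.1.
- exact: L2r_sq i.1.
Qed.

Lemma Q_uniq {u g1 g2 : R -> C} : H1_deriv u g1 -> H1_deriv u g2 -> Qf u g1 = Qf u g2.
Proof.
move=> h1 h2; rewrite /Qf /Rintegral; congr fine.
apply: ae_eq_integral.
- exact: mI01.
- exact: (measurable_int mu (Q_int h1)).
- exact: (measurable_int mu (Q_int h2)).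
have [r1 i1] := H1d_split h1; have [r2 i2] := H1d_split h2.
have ar := R1_uniq r1 r2; have ai := R1_uniq i1 i2.
apply: (filterS2 (ae_filter_ringOfSetsType mu) _ ar ai).
by move=> x hr hi Ix /=; rewrite hr // hi.
Qed.

Lemma H1norm_eq {u g : R -> C} : H1_deriv u g -> H1norm u = Num.sqrt (Qf u g).
Proof.
move=> h; rewrite /H1norm.
rewrite (_ : [set r | _] = [set Num.sqrt (Qf u g)]) ?sup1 //.
apply/seteqP; split => r /=.
  by move=> [g' [h' ->]]; rewrite -(Q_uniq h' h).
by move=> ->; exists g; split.
Qed.

Lemma H1norm_ge0 (u : R -> C) : 0 <= H1norm u.
Proof.
rewrite /H1norm; set S := [set r | _].
have [hs|hs] := pselect (has_sup S); last by rewrite sup_out.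
have [r Sr] := hs.1.
apply: le_trans (sup_upper_bound hs Sr).
by case: Sr => g [_ ->]; exact: sqrtr_ge0.
Qed.

Lemma H1d_ext {u v g : R -> C} : (forall x, x \in `[0, 1] -> u x = v x) ->
  H1_deriv u g -> H1_deriv v g.
Proof.
move=> uv [hg e]; split => // x xI.
have I0 : (0:R) \in `[0, 1] by rewrite in_itv /= lexx ler01.
by rewrite /ReF /ImF -!uv //; exact: e.
Qed.

Lemma Qf_ext {u v g : R -> C} : (forall x, x \in `[0, 1] -> u x = v x) ->
  Qf u g = Qf v g.
Proof.
move=> uv; rewrite /Qf; apply: eq_Rintegral => x xI.
by rewrite /ReF /ImF uv //; move: xI; rewrite inE.
Qed.

Lemma H1norm_ext {u v g : R -> C} : (forall x, x \in `[0, 1] -> u x = v x) ->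
  H1_deriv u g -> H1norm v = Num.sqrt (Qf u g).
Proof.
move=> uv h; rewrite (H1norm_eq (H1d_ext uv h)) (Qf_ext uv) //.
Qed.

Section hfun.
Variables (a b : R) (ha : 0 < a) (hab : a < b) (hb : b < 1).

Let s := (b - a)^-1.
Let s0 : 0 < s. Proof. by rewrite /s invr_gt0 subr_gt0. Qed.

Definition hd (x : R) : R := s * (\1_(`]a, b[%classic) x : R).
Definition hh (x : R) : R := Rintegral mu (`[0, x] : set R) hd.

Lemma hd_ge0 x : 0 <= hd x.
Proof. by rewrite /hd mulr_ge0 // ?ltW // /indic; case: (_ \in _). Qed.

Lemma hd_le x : `|hd x| <= s.
Proof.
rewrite ger0_norm ?hd_ge0 // /hd /indic; case: (_ \in _) => /=.
  by rewrite mulr1.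
by rewrite mulr0 ltW.
Qed.

Lemma hd_L2 : L2r hd.
Proof.
apply: (@L2r_bdd hd s); last by move=> x _; exact: hd_le.
apply: measurable_funM; first exact: measurable_cst.
apply: measurable_indic; exact: measurable_itv.
Qed.

Lemma hd_Q1 x : Q1 a b x -> hd x = 0.
Proof.
rewrite /Q1 /hd /indic /= => hx.
rewrite (_ : (x \in _) = false) ?mulr0 //.
apply/negP; rewrite inE /= in_itv /= => /andP[ax xb].
case: hx => /=; rewrite in_itv /= => /andP[h1 h2].
  by have := lt_trans h2 ax; rewrite ltxx.
by have := lt_trans xb h1; rewrite ltxx.
Qed.

Lemma hh_R1 : R1 hh hd.
Proof.
split; first exact: hd_L2.
move=> x _; rewrite {2}/hh set_itv1 Rintegral_set1 add0r //.
Qed.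

Lemma hh0 : hh 0 = 0.
Proof. by rewrite /hh set_itv1 Rintegral_set1. Qed.

Lemma hh1 : hh 1 = 1.
Proof.
rewrite /hh /hd RintegralZl; first last.
- apply: (@measurable_bounded_integrable _ _ _ mu).
  + exact: measurable_itv.
  + by have := ltry (1:R); rewrite -muI01.
  + apply: measurable_indic; exact: measurable_itv.
  + exists 1; split => // M hM x _ /=; apply: le_trans (ltW hM).
    by rewrite /indic; case: (_ \in _); rewrite ?normr1 ?normr0.
- exact: measurable_itv.
rewrite /Rintegral integral_indic; first last.
- exact: measurable_itv.
- exact: measurable_itv.
rewrite setIidl; last first.
  move=> x /=; rewrite !in_itv /= => /andP[h1 h2].
  by rewrite (ltW (lt_trans ha h1)) (ltW (lt_trans h2 hb)).
rewrite [X in fine X](_ : _ = (b - a)%:E); last first.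
  have H : lebesgue_measure (`]a, b[%classic : set R) = (b - a)%:E.
    by rewrite lebesgue_measure_itv /= lte_fin hab -EFinB.
  exact: H.
by rewrite /= /s mulVf // subr_eq0 gt_eqF.
Qed.

Lemma hh_le1 x : x \in `[0, 1] -> `|hh x| <= 1.
Proof.
rewrite in_itv /= => /andP[x0 x1].
apply: le_trans (L1bound hd_L2 x1) _.
rewrite -hh1 /hh le_eqVlt; apply/orP; left; apply/eqP.
by apply: eq_Rintegral => t _; rewrite ger0_norm ?hd_ge0.
Qed.

Lemma hh_L2 : L2r hh.
Proof. exact: (R1_L2 hh_R1). Qed.

End hfun.

Lemma ReD' (z w : C) : complex.Re (z + w) = complex.Re z + complex.Re w.
Proof. by case: z; case: w. Qed.
Lemma ImD' (z w : C) : complex.Im (z + w) = complex.Im z + complex.Im w.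
Proof. by case: z; case: w. Qed.
Lemma ReMr (c : C) (r : R) : complex.Re (c * complex.Complex r 0) = complex.Re c * r.
Proof. by case: c => x y /=; rewrite mulr0 subr0. Qed.
Lemma ImMr (c : C) (r : R) : complex.Im (c * complex.Complex r 0) = complex.Im c * r.
Proof. by case: c => x y /=; rewrite mulr0 add0r. Qed.

Lemma R1_lin {f1 g1 f2 g2 : R -> R} (k : R) : R1 f1 g1 -> R1 f2 g2 ->
  R1 (fun x => f1 x + k * f2 x) (fun x => g1 x + k * g2 x).
Proof.
move=> [h1 e1] [h2 e2]; split; first by apply: L2r_add => //; exact: L2r_scale.
move=> x xI; have := xI; rewrite in_itv /= => /andP[x0 x1].
rewrite RintegralD; first last.
- exact: (int_sub (L2r_scale k h2) x1).
- exact: (int_sub h1 x1).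
- exact: measurable_itv.
rewrite RintegralZl; first last.
- exact: (int_sub h2 x1).
- exact: measurable_itv.
rewrite (e1 x xI) (e2 x xI); lra.
Qed.

Definition hC a b (x : R) : C := complex.Complex (hh a b x) 0.
Definition hdC a b (x : R) : C := complex.Complex (hd a b x) 0.

Lemma H1d_addh a b (hab : a < b) (c : C) {u g : R -> C} : H1_deriv u g ->
  H1_deriv (fun x => u x + c * hC a b x) (fun x => g x + c * hdC a b x).
Proof.
move=> /H1d_split [r i]; apply: H1d_join.
- have := R1_lin (complex.Re c) r (hh_R1 a b hab).
  have -> : (fun x => ReF u x + complex.Re c * hh a b x) = ReF (fun x => u x + c * hC a b x).
    by apply/funext => x; rewrite /ReF ReD' ReMr.
  have -> : (fun x => ReF g x + complex.Re c * hd a b x) = ReF (fun x => g x + c * hdC a b x).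
    by apply/funext => x; rewrite /ReF ReD' ReMr.
  done.
- have := R1_lin (complex.Im c) i (hh_R1 a b hab).
  have -> : (fun x => ImF u x + complex.Im c * hh a b x) = ImF (fun x => u x + c * hC a b x).
    by apply/funext => x; rewrite /ImF ImD' ImMr.
  have -> : (fun x => ImF g x + complex.Im c * hd a b x) = ImF (fun x => g x + c * hdC a b x).
    by apply/funext => x; rewrite /ImF ImD' ImMr.
  done.
Qed.

Lemma hC0 a b : hC a b 0 = 0.
Proof. by rewrite /hC hh0. Qed.

Lemma Vth_ext p a b t {u v : R -> C} : (forall x, x \in `[0, 1] -> u x = v x) ->
  Vth p a b t u -> Vth p a b t v.
Proof.
move=> uv [[[g hg] hb] [g0 [hg0 hae]]].
have I0 : (0:R) \in `[0, 1] by rewrite in_itv /= lexx ler01.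
have I1 : (1:R) \in `[0, 1] by rewrite in_itv /= lexx ler01.
split; first split.
- by exists g; exact: H1d_ext uv hg.
- by rewrite -!uv.
exists g0; split => //; exact: H1d_ext uv hg0.
Qed.

Lemma hC1 a b : 0 < a -> a < b -> b < 1 -> hC a b 1 = 1.
Proof. by move=> ha hab hb; rewrite /hC hh1. Qed.

Lemma hdCQ1 a b x : Q1 a b x -> hdC a b x = 0.
Proof. by move=> hx; rewrite /hdC hd_Q1. Qed.

Lemma Vth_T p a b t1 t2 (ha : 0 < a) (hab : a < b) (hb : b < 1) {u : R -> C} :
  Vth p a b t1 u ->
  Vth p a b t2 (fun x => u x + ((expi2pi t2 - expi2pi t1) * u 0) * hC a b x).
Proof.
set c := (expi2pi t2 - expi2pi t1) * u 0.
move=> [[[g hg] hb1] [g0 [hg0 hae]]].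
split; first split.
- by exists (fun x => g x + c * hdC a b x); exact: H1d_addh.
- rewrite hC1 // hC0 hb1 /c mulr1 mulr0 addr0; ring.
exists (fun x => g0 x + c * hdC a b x); split; first exact: H1d_addh.
apply: filterS hae; first exact: (ae_filter_ringOfSetsType mu).
by move=> x hx Qx; rewrite hdCQ1 // mulr0 addr0; exact: hx.
Qed.

Lemma sumT (k : nat) (c : 'I_k -> C) (bb : 'I_k -> R -> C) (kk h : C) x :
  \sum_(i < k) c i * (bb i x + kk * bb i 0 * h) =
  \sum_(i < k) c i * bb i x + kk * (\sum_(i < k) c i * bb i 0) * h.
Proof.
under eq_bigr do rewrite mulrDr.
rewrite big_split /=; congr (_ + _).
rewrite mulr_sumr mulr_suml; apply: eq_bigr => i _; ring.
Qed.

Lemma lin_indep_T (k : nat) (bb : 'I_k -> R -> C) (kk : C) a b :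
  lin_indep_on bb ->
  lin_indep_on (fun i x => bb i x + kk * bb i 0 * hC a b x).
Proof.
move=> li c hc.
have I0 : (0:R) \in `[0, 1] by rewrite in_itv /= lexx ler01.
have h0 : \sum_(i < k) c i * bb i 0 = 0.
  by have := hc 0 I0; rewrite sumT hC0 mulr0 addr0.
apply: li => x xI.
by have := hc x xI; rewrite sumT h0 mulr0 mul0r addr0.
Qed.

Lemma cplx0 (r : R) (z : C) : r != 0 -> complex.Complex r 0 * z = 0 ->
  complex.Re z = 0 /\ complex.Im z = 0.
Proof.
case: z => x y r0 /= [].
rewrite !mul0r subr0 addr0 => /eqP; rewrite mulf_eq0 (negbTE r0) /= => /eqP ->.
by move=> /eqP; rewrite mulf_eq0 (negbTE r0) /= => /eqP ->.
Qed.

Lemma const_on {f g : R -> R} (a : R) : a <= 1 -> R1 f g ->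
  {ae mu, forall y, `]0, a[%classic y -> g y = 0} ->
  forall x, 0 < x < a -> f x = f 0.
Proof.
move=> a1 [hg e] hae x /andP[x0 xa].
have x1 : x <= 1 by exact: le_trans (ltW xa) a1.
rewrite e ?in_itv /= ?(ltW x0) ?x1 //.
rewrite -Rintegral_itv_obnd_cbnd; last first.
  apply: (integrableS _ _ _ (int_sub hg x1)) => //; try exact: measurable_itv.
  by apply: subset_itvr; rewrite bnd_simp.
suff -> : \int[mu]_(t in [set` Interval (BRight 0) (BRight x)]) g t = 0 by rewrite addr0.
rewrite /Rintegral (@ae_eq_integral _ _ _ mu _ (cst 0%E) (fun y => (g y)%:E)).
- by rewrite integral0.
- exact: measurable_itv.
- apply/measurable_EFinP; apply: (measurable_funS mI01 _ (L2r_mf hg)).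
  by move=> t /=; rewrite /I01 /= !in_itv /= => /andP[/ltW -> /le_trans]; apply.
- exact: measurable_cst.
apply: filterS hae; first exact: (ae_filter_ringOfSetsType mu).
move=> y hy /=; rewrite in_itv /= => /andP[y0 yx].
by rewrite hy //= in_itv /= y0 (le_lt_trans yx xa).
Qed.

Lemma lower_bound p a b t (hp : forall x, 0 < p x) (ha : 0 < a) (a1 : a <= 1)
  (u : R -> C) : Vth p a b t u -> H1norm u = 1 -> a * nsq (u 0) <= 1.
Proof.
move=> [_ [g0 [hg0 hae]]] hn.
have [r i] := H1d_split hg0.
have sub : `]0, a[%classic `<=` Q1 a b by move=> y yA; left.
have aeRI : {ae mu, forall y, `]0, a[%classic y -> ReF g0 y = 0 /\ ImF g0 y = 0}.
  apply: filterS hae; first exact: (ae_filter_ringOfSetsType mu).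
  move=> y hy yA; apply: (@cplx0 (p y)); first by rewrite gt_eqF.
  exact: hy (sub _ yA).
have aeR : {ae mu, forall y, `]0, a[%classic y -> ReF g0 y = 0}.
  apply: filterS aeRI; first exact: (ae_filter_ringOfSetsType mu).
  by move=> y hy yA; case: (hy yA).
have aeI : {ae mu, forall y, `]0, a[%classic y -> ImF g0 y = 0}.
  apply: filterS aeRI; first exact: (ae_filter_ringOfSetsType mu).
  by move=> y hy yA; case: (hy yA).
have cr := const_on a a1 r aeR.
have ci := const_on a a1 i aeI.
set F := fun x => ReF u x ^+ 2 + ImF u x ^+ 2 + ReF g0 x ^+ 2 + ImF g0 x ^+ 2.
have F0 : forall x, 0 <= F x.
  by move=> x; rewrite /F !addr_ge0 // sqr_ge0.
have hQ : Qf u g0 = 1.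
  have Q0 : 0 <= Qf u g0 by apply: Rintegral_ge0 => x _; exact: F0.
  rewrite (H1norm_eq hg0) in hn.
  by rewrite -(sqr_sqrtr Q0) hn expr1n.
have mA : measurable (`]0, a[%classic : set T) by exact: measurable_itv.
have AI : `]0, a[%classic `<=` @I01 R.
  move=> y /=; rewrite /I01 /= !in_itv /= => /andP[y0 ya].
  by rewrite (ltW y0) (le_trans (ltW ya) a1).
have iF : mu.-integrable (@I01 R) (EFin \o F) by exact: Q_int hg0.
have step1 : Rintegral mu `]0, a[%classic F <= 1.
  rewrite -hQ; apply: Rint_sub_le => //; try exact: mI01; try (by move=> x _; exact: F0).
have step2 : Rintegral mu `]0, a[%classic (fun _ => nsq (u 0)) <= Rintegral mu `]0, a[%classic F.
  apply: le_Rintegral => //.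
  - exact: (integrableS mI01 mA AI (integrable_cstI (nsq (u 0)))).
  - exact: (integrableS mI01 mA AI iF).
  move=> x /=; rewrite in_itv /= => xA.
  rewrite /F /nsq -[complex.Re (u 0)]/(ReF u 0) -[complex.Im (u 0)]/(ImF u 0).
  rewrite -(cr x xA) -(ci x xA).
  have := sqr_ge0 (ReF g0 x); have := sqr_ge0 (ImF g0 x); lra.
have step3 : Rintegral mu `]0, a[%classic (fun _ => nsq (u 0)) = nsq (u 0) * a.
  rewrite Rintegral_cst //; congr (_ * _).
  have H : lebesgue_measure (`]0, a[%classic : set R) = a%:E.
    by rewrite lebesgue_measure_itv /= lte_fin ha -EFinB subr0.
  by rewrite [X in fine X](_ : _ = a%:E) //; exact: H.
by rewrite mulrC -step3 (le_trans step2 step1).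
Qed.

Lemma R1_scale {f g : R -> R} (k : R) : R1 f g -> R1 (fun x => k * f x) (fun x => k * g x).
Proof.
move=> [h e]; split; first exact: L2r_scale.
move=> x xI; have := xI; rewrite in_itv /= => /andP[x0 x1].
rewrite RintegralZl; first last.
- exact: (int_sub h x1).
- exact: measurable_itv.
by rewrite (e x xI) mulrDr.
Qed.

Lemma H1d_ch a b (hab : a < b) (c : C) :
  H1_deriv (fun x => c * hC a b x) (fun x => c * hdC a b x).
Proof.
apply: H1d_join.
- have := R1_scale (complex.Re c) (hh_R1 a b hab).
  have -> : (fun x => complex.Re c * hh a b x) = ReF (fun x => c * hC a b x).
    by apply/funext => x; rewrite /ReF ReMr.
  have -> : (fun x => complex.Re c * hd a b x) = ReF (fun x => c * hdC a b x).
    by apply/funext => x; rewrite /ReF ReMr.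
  done.
- have := R1_scale (complex.Im c) (hh_R1 a b hab).
  have -> : (fun x => complex.Im c * hh a b x) = ImF (fun x => c * hC a b x).
    by apply/funext => x; rewrite /ImF ImMr.
  have -> : (fun x => complex.Im c * hd a b x) = ImF (fun x => c * hdC a b x).
    by apply/funext => x; rewrite /ImF ImMr.
  done.
Qed.

Lemma sq_le (y M : R) : `|y| <= M -> y ^+ 2 <= M ^+ 2.
Proof.
move=> h; have n0 := normr_ge0 y; rewrite -(real_normK (num_real y)).
set n := `|y| in n0 h *; nra.
Qed.

Lemma ineq4 (cr ci p q S : R) : p ^+ 2 <= 1 -> q ^+ 2 <= S ->
  (cr * p) ^+ 2 + (ci * p) ^+ 2 + (cr * q) ^+ 2 + (ci * q) ^+ 2 <=
  (cr ^+ 2 + ci ^+ 2) * (1 + S).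
Proof.
move=> h1 h2; have hc1 := sqr_ge0 cr; have hc2 := sqr_ge0 ci.
rewrite !exprMn.
have e1 := ler_wpM2l hc1 h1; have e2 := ler_wpM2l hc2 h1.
have e3 := ler_wpM2l hc1 h2; have e4 := ler_wpM2l hc2 h2.
lra.
Qed.

Lemma upper a b (ha : 0 < a) (hab : a < b) (hb : b < 1) (c : C) (v : R -> C) :
  (forall x, x \in `[0, 1] -> c * hC a b x = v x) ->
  H1norm v <= Num.sqrt (nsq c * (1 + (b - a)^-1 ^+ 2)).
Proof.
move=> cv; rewrite (H1norm_ext cv (H1d_ch a b hab c)).
apply: ler_wsqrtr.
set K := nsq c * (1 + (b - a)^-1 ^+ 2).
have -> : K = Rintegral mu (@I01 R) (fun _ => K).
  rewrite Rintegral_cst; last exact: mI01.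
  have H : lebesgue_measure (@I01 R) = 1%:E by exact: muI01.
  by rewrite [X in fine X](_ : _ = 1%:E) ?mulr1 //; exact: H.
apply: le_Rintegral.
- exact: mI01.
- exact: Q_int (H1d_ch a b hab c).
- exact: integrable_cstI.
move=> x Ix; rewrite /ReF /ImF !ReMr !ImMr /K /nsq.
have h1 : hh a b x ^+ 2 <= 1 ^+ 2.
  by apply: sq_le; apply: hh_le1 => //; rewrite in_itv /=; exact/I01P.
have h2 : hd a b x ^+ 2 <= (b - a)^-1 ^+ 2 by apply: sq_le; exact: hd_le.
rewrite expr1n in h1.
by apply: ineq4.
Qed.

Lemma nsqM (z w : C) : nsq (z * w) = nsq z * nsq w.
Proof. by case: z => x y; case: w => x' y'; rewrite /nsq /=; ring. Qed.

Lemma nsqN (z : C) : nsq (- z) = nsq z.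
Proof. by case: z => x y; rewrite /nsq /= !sqrrN. Qed.

Lemma nsq_ge0 (z : C) : 0 <= nsq z.
Proof. by rewrite /nsq addr_ge0 // sqr_ge0. Qed.

Lemma cos_near1 (eta : R) : 0 < eta ->
  exists2 d : R, 0 < d & forall y, `|y| < d -> 1 - cos y < eta.
Proof.
move=> e0.
have := @continuous_cos R 0.
move/(@cvgrPdist_lt _ _ _ _ (nbhs_filter 0)) => /(_ eta e0).
rewrite cos0 => /nbhs_norm0P [d /= d0 hd].
exists d => // y hy.
have := hd y hy => /= h.
exact: le_lt_trans (ler_norm _) h.
Qed.

Lemma e_dist t1 t2 : nsq (expi2pi t2 - expi2pi t1) = 2 - 2 * cos (2 * pi * t2 - 2 * pi * t1).
Proof.
rewrite /nsq /expi2pi /= cosB.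
have h1 := cos2Dsin2 (2 * pi * t1); have h2 := cos2Dsin2 (2 * pi * t2).
set c1 := cos (2 * pi * t1) in h1 *; set s1 := sin (2 * pi * t1) in h1 *.
set c2 := cos (2 * pi * t2) in h2 *; set s2 := sin (2 * pi * t2) in h2 *.
have -> : (c2 - c1) ^+ 2 + (s2 - s1) ^+ 2 =
  (c2 ^+ 2 + s2 ^+ 2) + (c1 ^+ 2 + s1 ^+ 2) - 2 * (c2 * c1 + s2 * s1) by ring.
rewrite h1 h2; ring.
Qed.

Lemma aux_pi (d P : R) : 0 < P -> 2 * P * (d / (4 * P)) = d / 2.
Proof. move=> P0; field; by rewrite gt_eqF. Qed.

Lemma e_close t1 (eta : R) : 0 < eta -> exists2 d : R, 0 < d &
  forall t2, `|t2 - t1| <= d -> nsq (expi2pi t2 - expi2pi t1) < eta.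
Proof.
move=> e0.
have [d d0 hd] := cos_near1 (eta / 2) ltac:(by rewrite divr_gt0).
have p0 := pi_gt0 R.
exists (d / (4 * pi)); first by rewrite divr_gt0 // mulr_gt0.
move=> t2 ht.
rewrite e_dist.
have : 1 - cos (2 * pi * t2 - 2 * pi * t1) < eta / 2.
  apply: hd.
  rewrite -mulrBr normrM (ger0_norm (ltW (mulr_gt0 _ p0))) //.
  have : 2 * pi * `|t2 - t1| <= 2 * pi * (d / (4 * pi)).
    by apply: ler_wpM2l => //; rewrite mulr_ge0 // ltW.
  move=> /le_lt_trans; apply.
  rewrite (@aux_pi d pi p0).
  lra.
lra.
Qed.

Lemma div_bound (a x y : R) : 0 < a -> a * x <= 1 -> 0 <= y -> y * x <= y / a.
Proof.
move=> ha hax hy; rewrite ler_pdivlMr //.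
have := ler_wpM2l hy hax; rewrite mulr1 => h.
by rewrite -mulrA [x * a]mulrC.
Qed.

Lemma dist_le (N M : set (R -> C)) (B : R) : 0 <= B ->
  (forall u, N u -> H1norm u = 1 -> exists v, M v /\ H1norm (u - v) <= B) ->
  dist N M <= B.
Proof.
move=> B0 hNM; rewrite /dist; set S := [set d | _].
have [[d Sd]|S0] := pselect (S !=set0); last first.
  rewrite sup_out // => -[[d Sd] _]; apply: S0; by exists d.
apply: ge_sup; first by exists d.
move=> _ [u [Nu [hu ->]]].
have [v [Mv hv]] := hNM u Nu hu.
apply: le_trans hv.
apply: ge_inf; last by exists v.
by exists 0 => _ [w [_ ->]]; exact: H1norm_ge0.
Qed.

Lemma main_sec (p : R -> R) (hp : coeff_ok p)
  (alpha beta : R) (hab : 0 < alpha /\ alpha < beta /\ beta < 1)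
  (theta1 : R) (ht1 : 0 <= theta1 < 1)
  (k : nat) (F1 : set (R -> complex.complex R))
  (hF1 : subspace_dim F1 k) (hF1V : F1 `<=` Vth p alpha beta theta1) :
  forall eps : R, 0 < eps ->
  exists delta : R, 0 < delta /\
    forall theta2 : R, 0 <= theta2 < 1 -> `|theta2 - theta1| <= delta ->
      exists F2 : set (R -> complex.complex R),
        subspace_dim F2 k /\ F2 `<=` Vth p alpha beta theta2 /\
        Num.max (dist F1 F2) (dist F2 F1) < eps.
Proof.
move=> eps eps0.
have ppos : forall x, 0 < p x by case: hp => _ [_ [h _]].
case: hab => ha [hab' hb].
have a1 : alpha <= 1 by apply: ltW; exact: lt_trans hab' hb.
have [bb [li F1E]] := hF1.
set K := 1 + (beta - alpha)^-1 ^+ 2.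
have K0 : 0 < K by rewrite /K ltr_pwDl ?sqr_ge0.
set eta := eps ^+ 2 * alpha / K.
have eta0 : 0 < eta by rewrite /eta divr_gt0 // mulr_gt0 // exprn_gt0.
have [delta d0 hd] := e_close theta1 eta eta0.
exists delta; split => // theta2 _ ht2.
set kk := expi2pi theta2 - expi2pi theta1.
have hkk := hd theta2 ht2.
set Tb := fun (i : 'I_k) x => bb i x + kk * bb i 0 * hC alpha beta x.
have I0 : (0:R) \in `[0, 1] by rewrite in_itv /= lexx ler01.
set Bd := Num.sqrt (nsq kk * K / alpha).
have Bd0 : 0 <= Bd by exact: sqrtr_ge0.
have Bdeps : Bd < eps.
  rewrite /Bd -(ger0_norm (ltW eps0)) -sqrtr_sqr ltr_sqrt ?exprn_gt0 //.
  have := hkk; rewrite /eta ltr_pdivlMr // => h.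
  by rewrite ltr_pdivrMr // mulrC.
have keyb : forall (c : C) (v : R -> C) (u0 : C), alpha * nsq u0 <= 1 ->
    (forall x, x \in `[0, 1] -> (kk * u0) * hC alpha beta x = v x) ->
    H1norm v <= Bd.
  move=> c v u0 hu0 hv.
  apply: le_trans (@upper alpha beta ha hab' hb (kk * u0) v hv) _.
  apply: ler_wsqrtr; rewrite nsqM.
  rewrite -/K [nsq kk * K / alpha]mulrAC.
  have := @div_bound alpha (nsq u0) _ ha hu0 (mulr_ge0 (nsq_ge0 kk) (ltW K0)).
  move=> h; lra.
have F2V : span_on Tb `<=` Vth p alpha beta theta2.
  move=> v [c hc].
  set w := fun x => \sum_(i < k) c i * bb i x.
  have Fw : F1 w by rewrite F1E; exists c.
  have := Vth_T p alpha beta theta1 theta2 ha hab' hb (hF1V _ Fw).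
  apply: Vth_ext => x xI.
  by rewrite hc // /Tb sumT.
exists (span_on Tb); split; first by exists Tb; split => //; exact: lin_indep_T.
split => //.
rewrite gt_max; apply/andP; split; apply: le_lt_trans Bdeps.
- apply: dist_le => // u Fu hu.
  have Vu := hF1V _ Fu.
  have lb := lower_bound p alpha beta theta1 ppos ha a1 u Vu hu.
  move: (Fu); rewrite F1E => -[c hc].
  exists (fun x => u x + kk * u 0 * hC alpha beta x); split.
    exists c => x xI; rewrite /Tb sumT -(hc 0 I0) -(hc x xI) //.
  apply: (keyb 0 _ (- u 0)); first by rewrite nsqN.
  move=> x xI.
  have -> : (u - (fun x => u x + kk * u 0 * hC alpha beta x)) x =
    u x - (u x + kk * u 0 * hC alpha beta x) by [].
  ring.
- apply: dist_le => // w F2w hw.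
  have Vw := F2V _ F2w.
  have lb := lower_bound p alpha beta theta2 ppos ha a1 w Vw hw.
  move: (F2w) => -[c hc].
  set u := fun x => \sum_(i < k) c i * bb i x.
  exists u; split; first by rewrite F1E; exists c.
  have w0 : w 0 = u 0 by rewrite hc // /Tb sumT hC0 mulr0 addr0.
  apply: (keyb 0 _ (u 0)); first by rewrite -w0.
  move=> x xI.
  have -> : (w - u) x = w x - u x by [].
  rewrite hc // /Tb sumT /u; ring.
Qed.
End Dev.

Theorem proposition5p1 (R : realType) (p : R -> R) (hp : coeff_ok p)
  (alpha beta : R) (hab : 0 < alpha /\ alpha < beta /\ beta < 1)
  (theta1 : R) (ht1 : 0 <= theta1 < 1)
  (k : nat) (F1 : set (R -> complex.complex R))
  (hF1 : subspace_dim F1 k) (hF1V : F1 `<=` Vth p alpha beta theta1) :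
  forall eps : R, 0 < eps ->
  exists delta : R, 0 < delta /\
    forall theta2 : R, 0 <= theta2 < 1 -> `|theta2 - theta1| <= delta ->
      exists F2 : set (R -> complex.complex R),
        subspace_dim F2 k /\ F2 `<=` Vth p alpha beta theta2 /\
        Num.max (dist F1 F2) (dist F2 F1) < eps.
Proof. exact: (@main_sec R p hp alpha beta hab theta1 ht1 k F1 hF1 hF1V). Qed.
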